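(* The rule MaxHam satisfies antipodal strategyproofness and participation.
   Context: An agenda is a finite nonempty list $\Phi=(\phi_1,\dots,\phi_m)$ of propositional formulas; a judgment is $J\in\{0,1\}^m$; the antipodal judgment $\overline{J}$ accepts exactly the issues rejected by $J$. $\mathcal{J}(\Phi)\subseteq\{0,1\}^m$ is the nonempty set of admissible judgments. A profile for a finite set of agents $N$ is $\mathbf{P}=(J_1,\dots,J_n)\in\mathcal{J}(\Phi)^n$; $\mathbf{P}_{-i}$ removes agent $i$, $(\mathbf{P}_{-i},J)$ replaces $i$'s judgment by $J$. Hamming distance $H(J,J')=\sum_k|J(\phi_k)-J'(\phi_k)|$. $\mathrm{MaxHam}(\mathbf{P})=\arg\min_{J\in\mathcal{J}(\Phi)}\max_{i\in N}H(J_i,J)$. Agent $i$ with truthful $J_i$: $J\succeq_i J'$ iff $H(J_i,J)\le H(J_i,J')$. Set preferences $\mathrel{\mathring{\succeq}}_i$ (strict part $\mathrel{\mathring{\succ}}_i$) satisfy (R1) $J\succeq_i J'$ iff $\{J\}\mathrel{\mathring{\succeq}}_i\{J'\}$, and (R2) $X\mathrel{\mathring{\succ}}_i Y$ implies there exist $J\in X$, $J'\in Y$ with $J\succ_i J'$ and $\{J,J'\}\not\subseteq X\cap Y$. Participation: no $\mathbf{P}$, $i$ with $F(\mathbf{P}_{-i})\mathrel{\mathring{\succ}}_i F(\mathbf{P})$. Antipodal strategyproofness: no $\mathbf{P}$, $i$ with $F(\mathbf{P}_{-i},\overline{J_i})\mathrel{\mathring{\succ}}_i F(\mathbf{P})$.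 *)

(* Defs.v *)
From mathcomp Require Import all_boot.
Set Implicit Arguments. Unset Strict Implicit. Unset Printing Implicit Defensive.

(* A judgment on an agenda of m issues: J k = true iff issue k is accepted. *)
Definition judgment (m : nat) := {ffun 'I_m -> bool}.

Definition antipode m (J : judgment m) : judgment m := [ffun k => ~~ J k].

Definition ham m (J J' : judgment m) : nat := \sum_(k < m) (J k != J' k).

(* A profile for the finite agent set N (a subset of the finite type A) is
   given by P : A -> judgment m (only the values on N matter).  P_{-i} is
   (N :\ i, P); (P_{-i}, J) is (N, upd P i J). *)
Definition upd m (A : eqType) (P : A -> judgment m) (i : A) (J : judgment m)
  : A -> judgment m := fun j => if j == i then J else P j.

Definition is_profile m (A : finType) (Jadm : {set judgment m}) (N : {set A})
  (P : A -> judgment m) : Prop := forall i, i \in N -> P i \in Jadm.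

Definition maxdist m (A : finType) (N : {set A}) (P : A -> judgment m)
  (J : judgment m) : nat := \max_(i in N) ham (P i) J.

Definition MaxHam m (A : finType) (Jadm : {set judgment m}) (N : {set A})
  (P : A -> judgment m) : {set judgment m} :=
  [set J in Jadm | [forall J' in Jadm, maxdist N P J <= maxdist N P J']].

Definition strict_part T (R : T -> T -> Prop) (x y : T) : Prop := R x y /\ ~ R y x.

Definition R1 m (Ji : judgment m) (ext : {set judgment m} -> {set judgment m} -> Prop) :=
  forall J J' : judgment m, ham Ji J <= ham Ji J' <-> ext [set J] [set J'].

Definition R2 m (Ji : judgment m) (ext : {set judgment m} -> {set judgment m} -> Prop) :=
  forall X Y : {set judgment m}, strict_part ext X Y ->
    exists J, exists J', [/\ J \in X, J' \in Y, ham Ji J < ham Ji J' &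
      ~ (J \in X :&: Y /\ J' \in X :&: Y)].

Definition set_pref m (Ji : judgment m) (ext : {set judgment m} -> {set judgment m} -> Prop) :=
  R1 Ji ext /\ R2 Ji ext.

Definition participation m (A : finType) (Jadm : {set judgment m}) : Prop :=
  forall (N : {set A}) (P : A -> judgment m) (i : A),
    is_profile Jadm N P -> i \in N ->
    forall ext, set_pref (P i) ext ->
      ~ strict_part ext (MaxHam Jadm (N :\ i) P) (MaxHam Jadm N P).

(* Antipodal strategyproofness: the deviation profile (P_{-i}, antipode J_i)
   must itself be a profile, i.e. antipode J_i must be admissible. *)
Definition antipodal_sp m (A : finType) (Jadm : {set judgment m}) : Prop :=
  forall (N : {set A}) (P : A -> judgment m) (i : A),
    is_profile Jadm N P -> i \in N -> antipode (P i) \in Jadm ->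
    forall ext, set_pref (P i) ext ->
      ~ strict_part ext (MaxHam Jadm N (upd P i (antipode (P i)))) (MaxHam Jadm N P).

(* Main.v *)
Require Import Defs.
From mathcomp Require Import all_boot.
From mathcomp Require Import zify.

Lemma maxdist_split m (A : finType) (N : {set A}) (P : A -> judgment m) i J :
  i \in N -> maxdist N P J = maxn (ham (P i) J) (maxdist (N :\ i) P J).
Proof.
move=> iN; rewrite /maxdist (bigD1 i) //=; congr maxn.
by apply: eq_bigl => j; rewrite !inE andbC.
Qed.

Lemma maxdist_upd m (A : finType) (N : {set A}) (P : A -> judgment m) i K J :
  maxdist (N :\ i) (upd P i K) J = maxdist (N :\ i) P J.
Proof.
rewrite /maxdist; apply: eq_bigr => j; rewrite !inE => /andP[ji _].
by rewrite /upd (negbTE ji).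
Qed.

Lemma ham_anti m (Ji J : judgment m) : ham (antipode Ji) J = m - ham Ji J.
Proof.
suff: ham Ji J + ham (antipode Ji) J = m by lia.
rewrite /ham -big_split /=.
rewrite (eq_bigr (fun _ => 1)) ?sum_nat_const ?card_ord ?muln1 //.
by move=> k _; rewrite ffunE; case: (Ji k); case: (J k).
Qed.

Lemma MaxHamP m (A : finType) (Jadm : {set judgment m}) N (P : A -> judgment m) J :
  reflect (J \in Jadm /\ forall J', J' \in Jadm -> maxdist N P J <= maxdist N P J')
          (J \in MaxHam Jadm N P).
Proof.
rewrite /MaxHam inE; apply: (iffP andP) => [[h /forall_inP H]|[h H]]; split => //.
by apply/forall_inP.
Qed.

Theorem corollary1 (m : nat) (A : finType) (Jadm : {set judgment m}) :
  0 < m -> Jadm != set0 ->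
  antipodal_sp A Jadm /\ participation A Jadm.
Proof.
move=> _ _; split.
- move=> N P i _ iN _ ext [_ HR2] Hs.
  set X := MaxHam _ _ (upd _ _ _) in Hs. set Y := MaxHam _ _ P in Hs.
  have [J [J' [/MaxHamP[JA HJ] /MaxHamP[J'A HJ'] lt Hn]]] := HR2 _ _ Hs.
  have e1 := HJ _ J'A; have e2 := HJ' _ JA.
  move: e1 e2; rewrite !(@maxdist_split _ _ _ _ _ _ iN) !maxdist_upd /upd eqxx !ham_anti.
  move=> e1 e2.
  have [y1 y2] : maxdist N (upd P i (antipode (P i))) J' <= maxdist N (upd P i (antipode (P i))) J
         /\ maxdist N P J <= maxdist N P J'.
    rewrite !(@maxdist_split _ _ _ _ _ _ iN) !maxdist_upd /upd eqxx !ham_anti; lia.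
  have [m1 m2 m3 m4] : [/\ J \in X, J \in Y, J' \in X & J' \in Y].
    split; apply/MaxHamP; split => // K KA;
      first [exact: HJ | exact: HJ' | exact: leq_trans y2 (HJ' _ KA) | exact: leq_trans y1 (HJ _ KA) | exact: leq_trans y2 (HJ _ KA) | exact: leq_trans y1 (HJ' _ KA)].
  by apply: Hn; split; rewrite in_setI; apply/andP.
- move=> N P i _ iN ext [_ HR2] Hs.
  set X := MaxHam _ (N :\ i) _ in Hs. set Y := MaxHam _ N P in Hs.
  have [J [J' [/MaxHamP[JA HJ] /MaxHamP[J'A HJ'] lt Hn]]] := HR2 _ _ Hs.
  have e2 := HJ' _ JA.
  have e3 : forall K, K \in Jadm -> maxdist (N :\ i) P K <= maxdist N P K.
    by move=> K _; rewrite (@maxdist_split _ _ _ _ _ _ iN) leq_maxr.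
  have e1 := HJ _ J'A.
  have e4 := e3 _ J'A.
  move: e2 e4; rewrite !(@maxdist_split _ _ _ _ _ _ iN) => e2 e4.
  have y1 : maxdist N P J <= maxdist N P J' by rewrite !(@maxdist_split _ _ _ _ _ _ iN); lia.
  have y2 : maxdist (N :\ i) P J' <= maxdist (N :\ i) P J.
    have e5 := HJ' _ JA; move: e5; rewrite !(@maxdist_split _ _ _ _ _ _ iN).
    have h6 : forall K, K \in Jadm -> maxdist (N :\ i) P J <= maxdist (N :\ i) P K by [].
    lia.
  have [m1 m2 m3 m4] : [/\ J \in X, J \in Y, J' \in X & J' \in Y].
    split; apply/MaxHamP; split => // K KA;
      first [exact: HJ | exact: HJ' | exact: leq_trans y2 (HJ' _ KA) | exact: leq_trans y1 (HJ _ KA) | exact: leq_trans y2 (HJ _ KA) | exact: leq_trans y1 (HJ' _ KA)].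
  by apply: Hn; split; rewrite in_setI; apply/andP.
Qed.
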